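(* Let $K$ be any field, let $L\subset\mathbb{Z}^m$ be a non-zero lattice with $L\cap\mathbb{N}^m=\{\mathbf 0\}$, and let $I_L\subset K[x_1,\ldots,x_m]$ be its lattice ideal. Then $\mathrm{bar}(I_L)\ge\delta(\Gamma_L)_{\{0,1\}}$ and $\mathrm{ara}_{\mathcal{A}}(I_L)\ge\delta(\Gamma_L)_{\Omega}$, where $\Omega=\{0,1,\ldots,\dim\Gamma_L\}$.
   Context: For $\mathbf u\in\mathbb{N}^m$ write $\mathbf x^{\mathbf u}=x_1^{u_1}\cdots x_m^{u_m}$; for $\mathbf u\in\mathbb{Z}^m$, $\mathbf u_\pm\in\mathbb{N}^m$ are its positive and negative parts. $I_L=(\mathbf x^{\mathbf u_+}-\mathbf x^{\mathbf u_-}:\mathbf u\in L)$. $\mathrm{Sat}(L)=\{\mathbf u\in\mathbb{Z}^m:d\mathbf u\in L\text{ for some nonzero }d\in\mathbb{Z}\}$, and $\mathcal{A}=\{\mathbf a_1,\ldots,\mathbf a_m\}\subset\mathbb{Z}^n$ satisfies $\mathrm{Sat}(L)=\ker_{\mathbb{Z}}(\mathcal{A})$. Grade by $\deg_{\mathcal{A}}(x_i)=\mathbf a_i$; a polynomial is $\mathcal{A}$-homogeneous if all its monomials have the same $\mathcal{A}$-degree. $\mathrm{bar}(I_L)$ is the least $s$ such that there are binomials $B_1,\ldots,B_s\in I_L$ with $\mathrm{rad}(I_L)=\mathrm{rad}(B_1,\ldots,B_s)$; $\mathrm{ara}_{\mathcal{A}}(I_L)$ is the least $s$ such that there are $\mathcal{A}$-homogeneous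 $F_1,\ldots,F_s\in I_L$ with $\mathrm{rad}(I_L)=\mathrm{rad}(F_1,\ldots,F_s)$. A monomial $M$ is indispensable of $I_L$ if every system of binomial generators of $I_L$ contains a binomial having $M$ as a monomial. $\mathcal{T}_{\min}$ is the set of inclusion-minimal supports ($\mathrm{supp}(\mathbf x^{\mathbf w})=\{i:w_i\ne0\}$) of indispensable monomials of $I_L$. $\Gamma_L$ is the simplicial complex on vertex set $\mathcal{T}_{\min}$ in which $\{E_1,\ldots,E_k\}$ is a face iff there exist monomials $M_i$ with $\mathrm{supp}(M_i)=E_i$ all of the same $\mathcal{A}$-degree. For a simplicial complex $\mathcal{D}$ with vertex set $\mathcal{V}$ and $J\subseteq\{0,\ldots,\dim\mathcal{D}\}$, a $J$-matching is a set of pairwise disjoint faces of $\mathcal{D}$ each of dimension in $J$; its support is the union of these faces; it is a maximal $J$-matching if its support has the maximum possible cardinality among all $J$-matchings; $\delta(\mathcal{D})_J$ is the minimum number of faces in a maximal $J$-matching. *)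

(* Defs.v *)
From mathcomp Require Import all_boot all_order all_algebra.
From mathcomp Require Import mpoly.
Set Implicit Arguments. Unset Strict Implicit. Unset Printing Implicit Defensive.
Import Order.TTheory GRing.Theory Num.Theory.
Local Open Scope ring_scope.

Section Defs.
Variables (K : fieldType) (m n : nat).

Definition is_lattice (L : 'rV[int]_m -> Prop) : Prop :=
  L 0 /\ (forall u v, L u -> L v -> L (u - v)).

Definition Sat (L : 'rV[int]_m -> Prop) (u : 'rV[int]_m) : Prop :=
  exists d : int, d != 0 /\ L (d *: u).

Definition kerZ (A : 'I_m -> 'rV[int]_n) (u : 'rV[int]_m) : Prop :=
  \sum_(i < m) u ord0 i *: A i = 0.

Definition posp (u : 'rV[int]_m) : 'X_{1..m} :=
  [multinom (if (0 <= u ord0 i)%R then absz (u ord0 i) else 0%N) | i < m].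
Definition negp (u : 'rV[int]_m) : 'X_{1..m} :=
  [multinom (if (u ord0 i < 0)%R then absz (u ord0 i) else 0%N) | i < m].

Definition binom_of (u : 'rV[int]_m) : {mpoly K[m]} := 'X_[posp u] - 'X_[negp u].

Definition ideal_gen (S : {mpoly K[m]} -> Prop) (f : {mpoly K[m]}) : Prop :=
  exists (k : nat) (g s : 'I_k -> {mpoly K[m]}),
    (forall i, S (s i)) /\ f = \sum_(i < k) g i * s i.

Definition rad (J : {mpoly K[m]} -> Prop) (f : {mpoly K[m]}) : Prop :=
  exists k : nat, J (f ^+ k).

Definition same_rad (J1 J2 : {mpoly K[m]} -> Prop) : Prop :=
  forall f, rad J1 f <-> rad J2 f.

Definition lattice_ideal (L : 'rV[int]_m -> Prop) : {mpoly K[m]} -> Prop :=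
  ideal_gen (fun f => exists u, L u /\ f = binom_of u).

Definition is_binomial (f : {mpoly K[m]}) : Prop :=
  exists u v : 'X_{1..m}, f = 'X_[u] - 'X_[v].

Definition Adeg (A : 'I_m -> 'rV[int]_n) (w : 'X_{1..m}) : 'rV[int]_n :=
  \sum_(i < m) (w i)%:Z *: A i.

Definition A_homogeneous (A : 'I_m -> 'rV[int]_n) (f : {mpoly K[m]}) : Prop :=
  forall w w', w \in msupp f -> w' \in msupp f -> Adeg A w = Adeg A w'.

(* bar(I_L) <= s is witnessed by s binomials; ara_A(I_L) <= s by s
   A-homogeneous polynomials *)
Definition bar_achievable (L : 'rV[int]_m -> Prop) (s : nat) : Prop :=
  exists B : 'I_s -> {mpoly K[m]},
    (forall i, is_binomial (B i) /\ lattice_ideal L (B i)) /\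
    same_rad (lattice_ideal L) (ideal_gen (fun g => exists i, g = B i)).

Definition araA_achievable (A : 'I_m -> 'rV[int]_n) (L : 'rV[int]_m -> Prop)
    (s : nat) : Prop :=
  exists F : 'I_s -> {mpoly K[m]},
    (forall i, A_homogeneous A (F i) /\ lattice_ideal L (F i)) /\
    same_rad (lattice_ideal L) (ideal_gen (fun g => exists i, g = F i)).

Definition msuppset (w : 'X_{1..m}) : {set 'I_m} := [set i | w i != 0%N].

Definition indispensable (L : 'rV[int]_m -> Prop) (w : 'X_{1..m}) : Prop :=
  forall S : {mpoly K[m]} -> Prop,
    (forall f, S f -> is_binomial f) ->
    (forall f, ideal_gen S f <-> lattice_ideal L f) ->
    exists f, S f /\ w \in msupp f.

Definition Tmin (L : 'rV[int]_m -> Prop) (E : {set 'I_m}) : Prop :=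
  (exists w, indispensable L w /\ msuppset w = E) /\
  (forall w, indispensable L w -> msuppset w \subset E -> msuppset w = E).

Definition GammaL_face (A : 'I_m -> 'rV[int]_n) (L : 'rV[int]_m -> Prop)
    (F : {set {set 'I_m}}) : Prop :=
  (forall E, E \in F -> Tmin L E) /\
  exists (M : {set 'I_m} -> 'X_{1..m}) (d : 'rV[int]_n),
    forall E, E \in F -> msuppset (M E) = E /\ Adeg A (M E) = d.

Definition GammaL_dim (A : 'I_m -> 'rV[int]_n) (L : 'rV[int]_m -> Prop)
    (k : nat) : Prop :=
  (exists F, GammaL_face A L F /\ #|F| = k.+1) /\
  (forall F, GammaL_face A L F -> #|F| <= k.+1)%N.
End Defs.

Section Matchings.
Variable V : finType.
(* a simplicial complex is given by its face predicate on {set V};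
   J is a predicate on dimensions (dim F = #|F| - 1, F nonempty) *)
Definition J_matching (face : {set V} -> Prop) (J : nat -> Prop)
    (M : {set {set V}}) : Prop :=
  (forall F, F \in M -> face F /\ (0 < #|F|)%N /\ J (#|F|.-1)) /\
  (forall F G, F \in M -> G \in M -> F != G -> [disjoint F & G]).

Definition matching_support (M : {set {set V}}) : {set V} := \bigcup_(F in M) F.

Definition maximal_J_matching (face : {set V} -> Prop) (J : nat -> Prop)
    (M : {set {set V}}) : Prop :=
  J_matching face J M /\
  forall M', J_matching face J M' ->
    (#|matching_support M'| <= #|matching_support M|)%N.

Definition delta_le (face : {set V} -> Prop) (J : nat -> Prop) (s : nat) : Prop :=
  exists M, maximal_J_matching face J M /\ (#|M| <= s)%N.
End Matchings.

(* Main.v *)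
Require Import Defs.
From mathcomp Require Import all_boot all_order all_algebra.
From mathcomp Require Import mpoly.
From mathcomp Require Import zify ring.
From Stdlib Require Import ClassicalEpsilon Classical_Prop.
Set Implicit Arguments. Unset Strict Implicit. Unset Printing Implicit Defensive.
Import Order.TTheory GRing.Theory Num.Theory.
Local Open Scope ring_scope.

Section Main.
Variables (K : fieldType) (m : nat) (L : 'rV[int]_m -> Prop).
Hypothesis HL : is_lattice L.
Hypothesis Hpos : forall u, L u -> (forall i, 0 <= u ord0 i) -> u = 0.

Definition diff (v w : 'X_{1..m}) : 'rV[int]_m := \row_i ((v i)%:Z - (w i)%:Z).

Lemma LB u v : L u -> L v -> L (u - v).
Proof. by case: HL => _; apply. Qed.
Lemma LN u : L u -> L (- u).
Proof. by move=> Hu; rewrite -sub0r; apply: LB => //; case: HL. Qed.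
Lemma L0 : L 0. Proof. by case: HL. Qed.
Lemma LD u v : L u -> L v -> L (u + v).
Proof. by move=> Lu Lv; rewrite -(opprK v); apply: LB => //; apply: LN. Qed.

Lemma diff_sym v w : diff v w = - diff w v.
Proof. by apply/rowP=> i; rewrite !mxE opprB. Qed.
Lemma diffDr v w t : diff (v + t) (w + t) = diff v w.
Proof. apply/rowP=> i; rewrite !mxE !mnmDE !PoszD; lia. Qed.
Lemma diff_trans a b c : diff a c = diff a b + diff b c.
Proof. apply/rowP=> i; rewrite !mxE; lia. Qed.
Lemma diff_eq0 v w : diff v w = 0 -> v = w.
Proof. move=> /rowP H; apply/mnmP=> i; move: (H i); rewrite !mxE; lia. Qed.
Lemma diffvv v : diff v v = 0.
Proof. by apply/rowP=> i; rewrite !mxE subrr. Qed.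

Lemma diff_pn (u : 'rV[int]_m) : diff (posp u) (negp u) = u.
Proof.
apply/rowP=> i; rewrite !mxE /posp /negp !mnmE.
case: (lerP 0 (u ord0 i)) => h.
- by rewrite gez0_abs // subr0.
- by rewrite sub0r ltz0_abs // opprK.
Qed.

Lemma posp_neq_negp (u : 'rV[int]_m) : u != 0 -> posp u != negp u.
Proof. by apply: contra=> /eqP h; rewrite -(diff_pn u) h diffvv. Qed.

Lemma pn_disj (u : 'rV[int]_m) i : posp u i = 0%N \/ negp u i = 0%N.
Proof.
rewrite /posp /negp !mnmE; case: (lerP 0 (u ord0 i)) => h; [right|left]=> //.
Qed.

Lemma posp_opp (u : 'rV[int]_m) : posp (- u) = negp u.
Proof.
apply/mnmP=> i; rewrite /posp /negp !mnmE mxE.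
case: (ltrP (u ord0 i) 0) => h.
- by rewrite oppr_ge0 ltW // abszN.
- rewrite oppr_ge0; case: (lerP (u ord0 i) 0) => h2 //.
  have -> : u ord0 i = 0 by apply/eqP; rewrite eq_le h h2.
  by [].
Qed.

Lemma negp_nz (u : 'rV[int]_m) : L u -> u != 0 -> negp u != 0%MM.
Proof.
move=> Lu; apply: contra=> /eqP h; apply/eqP; apply: Hpos=> // i.
have := congr1 (fun w : 'X_{1..m} => w i) h; rewrite /negp /= mnmE mnm0E.
case: (ltrP (u ord0 i) 0) => // hl /eqP; rewrite absz_eq0 => /eqP h0.
by move: hl; rewrite h0.
Qed.

Lemma posp_le v w : (posp (diff v w) <= v)%MM.
Proof.
apply/mnm_lepP=> i; rewrite /posp mnmE mxE.
case: (lerP 0 _) => h //.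
have : ((absz ((v i)%:Z - (w i)%:Z))%:Z <= (v i)%:Z) by rewrite gez0_abs //; lia.
by rewrite lez_nat.
Qed.

Lemma diffDl v w t : diff (t + v) (t + w) = diff v w.
Proof. by rewrite ![(t + _)%MM]addmC diffDr. Qed.

Section Psi.
Variable C : pred 'X_{1..m}.
Hypothesis HC : forall v w, L (diff v w) -> C v = C w.

Definition psi (f : {mpoly K[m]}) := \sum_(v <- msupp f | C v) f@_v.

Lemma psi_widen f r : uniq r -> {subset msupp f <= r} ->
  \sum_(v <- r | C v) f@_v = psi f.
Proof.
move=> ur sub.
have pe : perm_eq r (msupp f ++ [seq x <- r | x \notin msupp f]).
  apply: uniq_perm => //.
    rewrite cat_uniq msupp_uniq filter_uniq // andbT /=.
    by apply/hasPn=> x; rewrite mem_filter => /andP[].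
  move=> x; rewrite mem_cat mem_filter.
  by case: (boolP (x \in msupp f)) => [/sub -> //|_]; rewrite /= ?orbT.
rewrite (perm_big _ pe) big_cat /= [X in _ + X]big1_seq ?addr0 //.
by move=> x /andP[_]; rewrite mem_filter => /andP[/memN_msupp_eq0].
Qed.

Lemma psiD f g : psi (f + g) = psi f + psi g.
Proof.
set r := undup (msupp f ++ msupp g).
have ur : uniq r by apply: undup_uniq.
rewrite -(@psi_widen (f + g) r) // -?(@psi_widen f r) -?(@psi_widen g r) //.
- by rewrite -big_split /=; apply: eq_bigr=> v _; rewrite mcoeffD.
- by move=> x hx; rewrite mem_undup mem_cat hx orbT.
- by move=> x hx; rewrite mem_undup mem_cat hx.
- by move=> x /msuppD_le; rewrite mem_undup.
Qed.

Lemma psi0 : psi 0 = 0.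
Proof. by rewrite /psi msupp0 big_nil. Qed.

Lemma psiN f : psi (- f) = - psi f.
Proof.
rewrite -(@psi_widen (- f) (msupp f)) ?msupp_uniq //.
  by rewrite /psi -sumrN; apply: eq_bigr=> v _; rewrite mcoeffN.
by move=> x; rewrite (perm_mem (msuppN f)).
Qed.

Lemma psiB f g : psi (f - g) = psi f - psi g.
Proof. by rewrite psiD psiN. Qed.

Lemma psi_sum k (F : 'I_k -> {mpoly K[m]}) : psi (\sum_(i < k) F i) = \sum_(i < k) psi (F i).
Proof. exact: (big_morph psi psiD psi0). Qed.

Lemma psiMX g a : psi (g * 'X_[a]) = \sum_(t <- msupp g | C (a + t)%MM) g@_t.
Proof.
rewrite /psi (perm_big _ (msuppMX g a)) big_map.
by apply: eq_bigr=> t _; rewrite mcoeffMX.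
Qed.

Lemma psi_binom g a b : L (diff a b) -> psi (g * ('X_[a] - 'X_[b])) = 0.
Proof.
move=> Lab; rewrite mulrBr psiB !psiMX.
rewrite (eq_bigl (fun t => C (b + t)%MM)) ?subrr // => t.
by apply: HC; rewrite diffDr.
Qed.

Lemma psi_ideal f : lattice_ideal L f -> psi f = 0.
Proof.
case=> k [g [s [Hs ->]]]; rewrite psi_sum big1 // => i _.
case: (Hs i) => u [Lu ->]; rewrite /binom_of psi_binom //.
by rewrite diff_pn.
Qed.
End Psi.

Definition pb (P : Prop) : bool :=
  if ClassicalEpsilon.excluded_middle_informative P then true else false.
Lemma pbP (P : Prop) : reflect P (pb P).
Proof. by rewrite /pb; case: ClassicalEpsilon.excluded_middle_informative => h; constructor. Qed.

Lemma coset (f : {mpoly K[m]}) v0 : lattice_ideal L f -> v0 \in msupp f ->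
  exists2 v, v \in msupp f & v != v0 /\ L (diff v v0).
Proof.
move=> If v0in.
apply: Classical_Prop.NNPP => H.
pose C v := pb (L (diff v v0)).
have HC : forall v w, L (diff v w) -> C v = C w.
  move=> v w Lvw; rewrite /C; apply/pbP/pbP.
    by move=> h; rewrite (diff_trans w v) diff_sym; apply: LD => //; apply: LN.
  by move=> h; rewrite (diff_trans v w); apply: LD.
have := psi_ideal HC If; rewrite /psi big_seq_cond.
rewrite (eq_bigl (pred1 v0)); last first.
  move=> v /=; case: (eqVneq v v0) => [->|ne]; first by rewrite v0in; apply/pbP; rewrite diffvv; apply: L0.
  case: (boolP (v \in msupp f)) => //= vin; apply/pbP => Lv.
  by apply: H; exists v.
rewrite -big_filter filter_pred1_uniq ?msupp_uniq // big_seq1 => /eqP.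
by rewrite mcoeff_eq0 v0in.
Qed.


Lemma mnm_eq_of_le (a b : 'X_{1..m}) : (a <= b)%MM -> (mdeg b <= mdeg a)%N -> a = b.
Proof.
move=> ab; rewrite -(submK ab) mdegD => h.
have : mdeg (b - a) = 0%N by lia.
by move/eqP; rewrite mdeg_eq0 => /eqP ->; rewrite add0m.
Qed.

Lemma mdeg_le (a b : 'X_{1..m}) : (a <= b)%MM -> (mdeg a <= mdeg b)%N.
Proof. by move=> ab; rewrite -(submK ab) mdegD leq_addl. Qed.

Lemma gen1 (S : {mpoly K[m]} -> Prop) f : S f -> ideal_gen S f.
Proof.
move=> Sf; exists 1%N, (fun _ => 1), (fun _ => f); split => //.
by rewrite big_ord1 mul1r.
Qed.

Lemma binom_in (u : 'rV[int]_m) : L u -> lattice_ideal L (binom_of K u).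
Proof. by move=> Lu; apply: gen1; exists u. Qed.

Lemma msuppXB (a b x : 'X_{1..m}) : a != b -> (x == a) || (x == b) ->
  x \in msupp ('X_[a] - 'X_[b] : {mpoly K[m]}).
Proof.
move=> ab hx; rewrite mcoeff_msupp mcoeffB !mcoeffX.
case/orP: hx => /eqP ->; rewrite eqxx.
  case: (b =P a) => [ba|_]; first by move: ab; rewrite ba eqxx.
  by rewrite subr0 oner_neq0.
case: (a =P b) => [ba|_]; first by move: ab; rewrite ba eqxx.
by rewrite sub0r oppr_eq0 oner_neq0.
Qed.

Lemma indisp_min (c : 'rV[int]_m) : L c -> c != 0 ->
  (forall c', L c' -> c' != 0 -> (posp c' <= posp c)%MM -> posp c' = posp c) ->
  indispensable K L (posp c).
Proof.
move=> Lc cnz Hmin S Sbin Sgen.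
set w := posp c.
have := (Sgen _).2 (binom_in Lc); case=> k [g [s [Hs Heq]]].
have cw : (binom_of K c)@_w != 0.
  rewrite /binom_of mcoeffB !mcoeffX eqxx.
  have -> : (negp c == w) = false by apply/negbTE; rewrite eq_sym posp_neq_negp.
  by rewrite subr0 oner_neq0.
move: cw; rewrite Heq raddf_sum /=.
case: (pickP (fun j => (g j * s j)@_w != 0)) => [j hj _|none]; last first.
  by rewrite big1 ?eqxx // => j _; move: (none j) => /negbFE/eqP.
have [a [b sE]] := Sbin _ (Hs j).
have Isj : lattice_ideal L (s j) by apply/(Sgen _).1/gen1.
have ab : a != b.
  by apply: contraNneq hj => ab; rewrite sE ab subrr mulr0 mcoeff0.
have [x xab hx] : exists2 x, (x == a) || (x == b) & (g j * 'X_[x])@_w != 0.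
  move: hj; rewrite sE mulrBr mcoeffB => hj.
  case: (eqVneq ((g j * 'X_[a])@_w) 0) => [h0|h]; last by exists a; rewrite ?eqxx.
  by exists b; rewrite ?eqxx ?orbT //; move: hj; rewrite h0 sub0r oppr_eq0.
have xw : (x <= w)%MM.
  move: hx; rewrite -mcoeff_msupp (perm_mem (msuppMX _ _)) => /mapP [t _ ->].
  exact: lem_addr.
have xin : x \in msupp (s j) by rewrite sE; apply: msuppXB.
have [v vin [vx Lv]] := coset Isj xin.
have Lc' : L (diff x v) by rewrite diff_sym; apply: LN.
have c'nz : diff x v != 0 by apply: contra vx => /eqP/diff_eq0 ->.
have pw : posp (diff x v) = w.
  apply: Hmin => //; exact: lepm_trans (posp_le _ _) xw.
have xw' : x = w.
  apply: mnm_eq_of_le => //; apply: mdeg_le; rewrite -pw; exact: posp_le.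
by exists (s j); split; [apply: Hs | rewrite -xw'].
Qed.

Lemma indisp_below (v v' : 'X_{1..m}) : v != v' -> L (diff v' v) ->
  exists w, indispensable K L w /\ (w <= v)%MM.
Proof.
move=> vv' Lv'.
pose P k := pb (exists c, L c /\ c != 0 /\ (posp c <= v)%MM /\ mdeg (posp c) = k).
have exP : exists k, P k.
  exists (mdeg (posp (diff v v'))); apply/pbP; exists (diff v v'); split.
    by rewrite diff_sym; apply: LN.
  split; first by apply: contra vv' => /eqP/diff_eq0 ->.
  by split => //; apply: posp_le.
case: (ex_minnP exP) => k /pbP [c [Lc [cnz [cv ck]]]] minP.
exists (posp c); split => //.
apply: indisp_min => // c' Lc' c'nz c'c.
apply: mnm_eq_of_le => //; rewrite ck; apply: minP; apply/pbP.
exists c'; do 3!split => //; exact: lepm_trans c'c cv.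
Qed.


Section Dirty.
Variable E : {set 'I_m}.
Definition clean (v : 'X_{1..m}) := msuppset v \subset E.
Definition dirty (f : {mpoly K[m]}) := forall v, v \in msupp f -> ~~ clean v.

Lemma msuppset_le (a b : 'X_{1..m}) : (a <= b)%MM -> msuppset a \subset msuppset b.
Proof.
move=> /mnm_lepP ab; apply/subsetP=> i; rewrite !inE.
by apply: contra => /eqP h; move: (ab i); rewrite h leqn0.
Qed.

Lemma dirty0 : dirty 0. Proof. by move=> v; rewrite msupp0. Qed.
Lemma dirtyD f g : dirty f -> dirty g -> dirty (f + g).
Proof. by move=> df dg v /msuppD_le; rewrite mem_cat => /orP[/df|/dg]. Qed.
Lemma dirtyN f : dirty f -> dirty (- f).
Proof. by move=> df v; rewrite (perm_mem (msuppN f)); apply: df. Qed.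
Lemma dirtyB f g : dirty f -> dirty g -> dirty (f - g).
Proof. by move=> df dg; apply: dirtyD => //; apply: dirtyN. Qed.
Lemma dirtyMl g f : dirty f -> dirty (g * f).
Proof.
move=> df v /msuppM_le /allpairsP [[v1 v2] [/= _ v2in ->]].
apply: contra (df _ v2in) => h; apply: subset_trans h.
by apply: msuppset_le; apply: lem_addl.
Qed.
Lemma dirtyMr g f : dirty g -> dirty (g * f).
Proof. by move=> dg; rewrite mulrC; apply: dirtyMl. Qed.
Lemma dirtyX c : ~~ clean c -> dirty 'X_[c].
Proof. by move=> nc v; rewrite msuppX mem_seq1 => /eqP ->. Qed.

Lemma dirty_pow w c k : ~~ clean c ->
  dirty (('X_[w] - 'X_[c]) ^+ k - 'X_[w] ^+ k).
Proof.
move=> nc; elim: k => [|k IH]; first by rewrite !expr0 subrr; apply: dirty0.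
set x := 'X_[w] - 'X_[c]; set y := 'X_[w] : {mpoly K[m]}.
have -> : x ^+ k.+1 - y ^+ k.+1 = (x ^+ k - y ^+ k) * x - y ^+ k * 'X_[c].
  by rewrite !exprSr /x /y; ring.
by apply: dirtyB; [apply: dirtyMr | apply: dirtyMl; apply: dirtyX].
Qed.
End Dirty.

Lemma key s (F : 'I_s -> {mpoly K[m]}) E :
  (forall i, lattice_ideal L (F i)) ->
  same_rad (lattice_ideal L) (ideal_gen (fun g => exists i, g = F i)) ->
  Tmin K L E -> exists i, exists2 v, v \in msupp (F i) & msuppset v = E.
Proof.
move=> IF hrad [[w [Iw wE]] Tm2].
have := Iw (fun f => exists u, L u /\ f = binom_of K u).
case.
- by move=> f [u [_ ->]]; exists (posp u), (negp u).
- by move=> f; split.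
move=> _ [[u [Lu ->]] win].
have pn : posp u != negp u.
  apply/negP => /eqP h; move: win; rewrite /binom_of h subrr msupp0 //.
have unz : u != 0.
  by apply: contra pn => /eqP u0; apply/eqP/diff_eq0; rewrite diff_pn u0.
have [c [Lc [cnz cw]]] : exists c, L c /\ c != 0 /\ posp c = w.
  move: win => /msuppB_le; rewrite !msuppX mem_cat !mem_seq1 => /orP[] /eqP h.
    by exists u; rewrite h.
  exists (- u); split; first exact: LN.
  by rewrite oppr_eq0 posp_opp h.
have zn := negp_nz Lc cnz.
have ncz : ~~ clean E (negp c).
  have [j hj] : exists j, negp c j != 0%N.
    apply: Classical_Prop.NNPP => H; move/negP: zn; apply.
    apply/eqP/mnmP => j; rewrite mnm0E; apply/eqP; apply: Classical_Prop.NNPP => hj.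
    by apply: H; exists j; apply/negP.
  apply/negP => /subsetP /(_ j); rewrite -wE -cw !inE hj => /(_ isT).
  by case: (pn_disj c j) => [-> //| h0]; move: hj; rewrite h0.
have cln : clean E w by rewrite /clean wE.
have [k hk] : Defs.rad (ideal_gen (fun g => exists i, g = F i)) (binom_of K c).
  by apply/hrad; exists 1%N; rewrite expr1; apply: binom_in.
apply: Classical_Prop.NNPP => H.
have dF : forall i, dirty E (F i).
  move=> i v vin; apply/negP => cv; apply: H; exists i; exists v => //.
  have [v' v'in [v'v Lv']] := coset (IF i) vin.
  have vv' : v != v' by rewrite eq_sym.
  have [w' [Iw' w'v]] := indisp_below vv' Lv'.
  have sub : msuppset w' \subset E := subset_trans (msuppset_le w'v) cv.
  have Ew' := Tm2 w' Iw' sub.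
  by apply/eqP; rewrite eqEsubset (cv : msuppset v \subset E) /= -Ew'; apply: msuppset_le.
case: hk => k' [g [s' [Hs hE]]].
have dk : dirty E (binom_of K c ^+ k).
  rewrite hE; apply: (big_ind (dirty E)); [exact: dirty0 | exact: dirtyD |].
  by move=> j _; case: (Hs j) => i ->; apply: dirtyMl.
have dY : dirty E ('X_[w] ^+ k).
  have -> : 'X_[w] ^+ k = binom_of K c ^+ k - (binom_of K c ^+ k - 'X_[w] ^+ k) by rewrite opprB addrC subrK.
  apply: dirtyB => //; rewrite /binom_of cw; exact: dirty_pow.
move: dY; rewrite mpolyXn => /(_ (w *+ k)%MM); rewrite msuppX mem_seq1 eqxx => /(_ isT) /negP; apply.
apply: subset_trans cln; apply/subsetP => i; rewrite !inE mulmnE muln_eq0 negb_or.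
by case/andP.
Qed.

Section Comb.
Variables (n : nat) (A : 'I_m -> 'rV[int]_n) (s : nat) (F : 'I_s -> {mpoly K[m]}) (J : nat -> Prop).
Hypothesis IF : forall i, lattice_ideal L (F i).
Hypothesis hrad : same_rad (lattice_ideal L) (ideal_gen (fun g => exists i, g = F i)).
Hypothesis hom : forall i w w', w \in msupp (F i) -> w' \in msupp (F i) -> Adeg A w = Adeg A w'.
Hypothesis hJ : forall i G, GammaL_face K A L G -> (0 < #|G|)%N ->
  (#|G| <= size (msupp (F i)))%N -> J (#|G|.-1).

Definition PE (E : {set 'I_m}) (iv : 'I_s * 'X_{1..m}) :=
  (iv.2 \in msupp (F iv.1)) && (msuppset iv.2 == E).

Definition sel (E : {set 'I_m}) : option ('I_s * 'X_{1..m}) :=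
  match ClassicalEpsilon.excluded_middle_informative (exists iv, PE E iv) with
  | left h => Some (xchoose h)
  | right _ => None
  end.

Lemma selP E : Tmin K L E -> exists iv, sel E = Some iv /\ PE E iv.
Proof.
move=> TE; rewrite /sel; case: ClassicalEpsilon.excluded_middle_informative => h.
  by exists (xchoose h); split => //; apply: xchooseP.
exfalso; apply: h; have [i [v vin vE]] := key IF hrad TE.
by exists (i, v); rewrite /PE /= vin vE eqxx.
Qed.

Definition Gi (i : 'I_s) : {set {set 'I_m}} :=
  [set E | pb (Tmin K L E) && (if sel E is Some iv then iv.1 == i else false)].
Definition Mf (E : {set 'I_m}) : 'X_{1..m} := if sel E is Some iv then iv.2 else 0%MM.

Lemma GiP i E : E \in Gi i -> [/\ Tmin K L E, Mf E \in msupp (F i) & msuppset (Mf E) = E].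
Proof.
rewrite inE => /andP [/pbP TE].
have [[j v] [sE /andP [/= vin /eqP vE]]] := selP TE.
rewrite /Mf sE /= => /eqP ji; by rewrite -ji.
Qed.

Lemma Gi_face i : GammaL_face K A L (Gi i).
Proof.
split; first by move=> E /GiP [].
exists Mf, (Adeg A (head 0%MM (msupp (F i)))) => E /GiP [_ Min ME]; split => //.
have hin : head 0%MM (msupp (F i)) \in msupp (F i).
  by move: Min; case: (msupp (F i)) => //= x r _; apply: mem_head.
exact: (hom Min hin).
Qed.

Lemma Gi_card i : (#|Gi i| <= size (msupp (F i)))%N.
Proof.
rewrite cardE -(size_map Mf); apply: uniq_leq_size.
  rewrite map_inj_in_uniq ?enum_uniq // => E E'; rewrite !mem_enum.
  by move=> /GiP [_ _ e1] /GiP [_ _ e2] h; rewrite -e1 -e2 h.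
by move=> x /mapP [E]; rewrite mem_enum => /GiP [_ h _] ->.
Qed.

Lemma Gi_disj i j E : E \in Gi i -> E \in Gi j -> i = j.
Proof.
rewrite !inE => /andP [_ hi] /andP [_ hj].
by move: hi hj; case: (sel E) => // iv /eqP <- /eqP.
Qed.

Lemma comb : delta_le (GammaL_face K A L) J s.
Proof.
pose M := [set Gi i | i in [set i | Gi i != set0]].
have MJ : J_matching (GammaL_face K A L) J M.
  split.
    move=> G /imsetP [i]; rewrite inE => ne ->.
    have pos : (0 < #|Gi i|)%N by rewrite card_gt0.
    by split; [apply: Gi_face | split => //; apply: hJ => //; [apply: Gi_face | apply: Gi_card]].
  move=> G1 G2 /imsetP [i _ ->] /imsetP [j _ ->] ne.
  rewrite -setI_eq0; apply/eqP/setP => E; rewrite in_setI in_set0.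
  apply/negP => /andP [h1 h2]; move: ne; rewrite (Gi_disj h1 h2) eqxx.
  by [].
exists M; split; last first.
  apply: leq_trans (leq_imset_card _ _) _.
  by apply: leq_trans (max_card _) _; rewrite card_ord.
split => // M' [M'f _]; apply: subset_leq_card; apply/subsetP => E /bigcupP [G GM EG].
have [[Gf _] _] := M'f G GM.
have TE := Gf E EG.
have [[i v] [si /andP [/= vin /eqP vE]]] := selP TE.
have EGi : E \in Gi i by rewrite inE si eqxx andbT; apply/pbP.
apply/bigcupP; exists (Gi i) => //.
apply/imsetP; exists i => //; rewrite inE; apply/set0Pn; by exists E.
Qed.
End Comb.

End Main.

Lemma Adeg_L (m n : nat) (L : 'rV[int]_m -> Prop) (A : 'I_m -> 'rV[int]_n) :
  (forall u, Sat L u <-> kerZ A u) -> forall a b, L (diff b a) -> Adeg A b = Adeg A a.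
Proof.
move=> HS a b Lba.
have K0 : kerZ A (diff b a) by apply/HS; exists 1; rewrite scale1r.
apply/eqP; rewrite -subr_eq0 /Adeg -sumrB; apply/eqP.
transitivity (\sum_(i < m) diff b a ord0 i *: A i); last exact: K0.
by apply: eq_bigr => i _; rewrite mxE scalerBl.
Qed.

Unset Implicit Arguments.
Set Strict Implicit.

Theorem theorem2p13 (K : fieldType) (m n : nat)
    (L : 'rV[int]_m -> Prop) (A : 'I_m -> 'rV[int]_n) :
  is_lattice L ->
  (exists u, L u /\ u != 0) ->
  (forall u, L u -> (forall i, 0 <= u ord0 i) -> u = 0) ->
  (forall u, Sat L u <-> kerZ A u) ->
  (forall s, bar_achievable K L s ->
     delta_le (GammaL_face K A L) (fun k => k = 0%N \/ k = 1%N) s) /\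
  (forall s, araA_achievable K A L s ->
     forall dimG, GammaL_dim K A L dimG ->
     delta_le (GammaL_face K A L) (fun k => (k <= dimG)%N) s).
Proof.
move=> HL _ Hpos HS; split.
- move=> s [B [HB hrad]].
  apply: (comb HL Hpos (A := A) (F := B)) => //.
  + by move=> i; case: (HB i).
  + move=> i w w'; case: (HB i) => [[a [b Be]] IB].
    have key2 : forall x, x \in msupp (B i) -> Adeg A x = Adeg A a.
      move=> x xin.
      have [v vin [va Lv]] := coset HL IB xin.
      have : x \in [:: a; b] /\ v \in [:: a; b].
        by split; move: (xin) (vin); rewrite Be => /msuppB_le + /msuppB_le; rewrite !msuppX.
      rewrite !inE => -[/orP [/eqP xa|/eqP xb] /orP [/eqP va'|/eqP vb]].
      * by rewrite xa.
      * by rewrite xa.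
      * rewrite xb; symmetry; apply: (Adeg_L HS); by move: Lv; rewrite va' xb.
      * by move: va; rewrite vb xb eqxx.
    by move=> wi w'i; rewrite (key2 _ wi) (key2 _ w'i).
  + move=> i G _ pos le2.
    have : (size (msupp (B i)) <= 2)%N.
      case: (HB i) => [[a [b Be]] _].
      have -> : 2%N = size [:: a; b] by [].
      by apply: uniq_leq_size; [apply: msupp_uniq | move=> x; rewrite Be => /msuppB_le; rewrite !msuppX].
    move=> h; have := leq_trans le2 h; case: #|G| pos => // [[|[|k]]] //= _; [left|right] => //.
- move=> s [F [HF hrad]] dimG [_ Hd].
  apply: (comb HL Hpos (A := A) (F := F)) => //.
  + by move=> i; case: (HF i).
  + by move=> i w w' wi w'i; case: (HF i) => H _; apply: H.
  + move=> i G GF pos _; have := Hd G GF; case: #|G| pos => //= k _.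
Qed.
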